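(* Let $1\le d\le N$ be integers. A real matrix $\lambda=(\lambda_{i,n})\in\mathbb{R}^{d\times(N+1)}$ (rows $1\le i\le d$, columns $0\le n\le N$) lies in $\Lambda_{N,d}$ if and only if it satisfies all of the following: (C1) $\lambda_{i,n}=0$ whenever $i>n$; (C2) $\lambda_{i,n}=N$ whenever $i<n+d-N+1$; (C3) $\sum_{i=1}^d\lambda_{i,n}=dn$ for $0<n<N$; (C4) $\lambda_{i,n}\le\lambda_{i,n+1}$ for $1\le i\le d$ and $i\le n<N-d+i-1$; (C5) $\lambda_{i,n}\le\lambda_{i-1,n-1}$ for $1<i\le d$ and $i\le n<N-d+i$; (C6) $\lambda_{d,d}\ge 0$; (C7) $\lambda_{1,N-d}\le N$.
   Context: For integers $0\le d\le N$, $\Lambda_{N,d}\subseteq\mathbb{R}^{d\times(N+1)}$ denotes the set of real matrices $\lambda=(\lambda_{i,n})$, with rows indexed by $1\le i\le d$ and columns indexed by $0\le n\le N$, satisfying: $\lambda_{i,0}=0$ for $1\le i\le d$; $\lambda_{i,N}=N$ for $1\le i\le d$; $\sum_{i=1}^d\lambda_{i,n}=dn$ for $0\le n\le N$; $\lambda_{i,n}\le\lambda_{i,n+1}$ for $1\le i\le d$, $0\le n<N$ (horizontal inequalities); $\lambda_{i,n}\le\lambda_{i-1,n-1}$ for $1<i\le d$, $0<n\le N$ (diagonal inequalities). (This is the polytope of eigensteps of equal norm tight frames of $N$ vectors in $d$ dimensions with squared norms $d$.) *)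

(* Defs.v *)
From HB Require Import structures.
From mathcomp Require Import all_boot all_order all_algebra.
Set Implicit Arguments. Unset Strict Implicit. Unset Printing Implicit Defensive.
Import Order.TTheory GRing.Theory Num.Theory.
Local Open Scope ring_scope.

(* A real d x (N+1) matrix lambda = (lambda_{i,n}), rows 1 <= i <= d,
   columns 0 <= n <= N, is represented by a function lam : nat -> nat -> R
   with the paper's (1-based row, 0-based column) indexing: lam i n is
   lambda_{i,n}.  Values outside the index range 1<=i<=d, 0<=n<=N are
   irrelevant: every condition below only inspects in-range entries. *)

Definition in_Lambda (R : realFieldType) (N d : nat) (lam : nat -> nat -> R) : Prop :=
  [/\ (forall i, (1 <= i <= d)%N -> lam i 0%N = 0),
      (forall i, (1 <= i <= d)%N -> lam i N = N%:R),
      (forall n, (n <= N)%N -> \sum_(1 <= i < d.+1) lam i n = (d * n)%:R),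
      (forall i n, (1 <= i <= d)%N -> (n < N)%N -> lam i n <= lam i n.+1)
    & (forall i n, (1 < i <= d)%N -> (0 < n <= N)%N -> lam i n <= lam i.-1 n.-1)].

(* Main.v *)
Require Import Defs.
From HB Require Import structures.
From mathcomp Require Import all_boot all_order all_algebra.
From mathcomp Require Import zify.
Import Order.TTheory GRing.Theory Num.Theory.
Local Open Scope ring_scope.

Theorem proposition3p1 (R : realFieldType) (N d : nat) (lam : nat -> nat -> R) :
  (1 <= d)%N -> (d <= N)%N ->
  in_Lambda N d lam <->
  (* C1 *) (forall i n, (1 <= i <= d)%N -> (n <= N)%N -> (n < i)%N -> lam i n = 0) /\
  (* C2 *) (forall i n, (1 <= i <= d)%N -> (n <= N)%N -> (i + N < n + d + 1)%N ->
              lam i n = N%:R) /\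
  (* C3 *) (forall n, (0 < n < N)%N -> \sum_(1 <= i < d.+1) lam i n = (d * n)%:R) /\
  (* C4 *) (forall i n, (1 <= i <= d)%N -> (i <= n)%N -> (n + d + 1 < N + i)%N ->
              lam i n <= lam i n.+1) /\
  (* C5 *) (forall i n, (1 < i <= d)%N -> (i <= n)%N -> (n + d < N + i)%N ->
              lam i n <= lam i.-1 n.-1) /\
  (* C6 *) 0 <= lam d d /\
  (* C7 *) lam 1%N (N - d)%N <= N%:R.
Proof.
move=> d1 dN; split.
- case=> H0 HN HS HH HD.
  have Lo : forall i n, (1 <= i <= d)%N -> (n <= N)%N -> 0 <= lam i n.
    move=> i n Hi; elim: n => [|n IH] Hn; first by rewrite H0.
    apply: le_trans (IH _) (HH _ _ Hi _) => //; lia.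
  have Up : forall i n, (1 <= i <= d)%N -> (n <= N)%N -> lam i n <= N%:R.
    move=> i n Hi Hn.
    have : forall m n, (n + m = N)%N -> lam i n <= N%:R.
      elim=> [|m IH] k Hk; first by rewrite addn0 in Hk; rewrite Hk HN.
      apply: le_trans (HH _ _ Hi _) (IH _ _); lia.
    by move/(_ (N - n)%N n); apply; lia.
  have C1 : forall i n, (1 <= i <= d)%N -> (n <= N)%N -> (n < i)%N -> lam i n = 0.
    move=> i n Hi Hn Hni; apply/le_anti; rewrite Lo // andbT.
    elim: n i Hi Hn Hni => [|n IH] i Hi Hn Hni; first by rewrite H0.
    apply: le_trans (HD _ _ _ _) _; first lia; first lia.
    apply: IH; lia.
  have C2 : forall i n, (1 <= i <= d)%N -> (n <= N)%N -> (i + N < n + d + 1)%N ->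
              lam i n = N%:R.
    move=> i n Hi Hn Hc; apply/le_anti; rewrite Up //=.
    have : forall m i n, (n + m = N)%N -> (1 <= i <= d)%N -> (i + N < n + d + 1)%N ->
        N%:R <= lam i n.
      elim=> [|m IH] i' k Hk Hi' Hc'; first by rewrite addn0 in Hk; rewrite Hk HN.
      apply: le_trans (IH i'.+1 k.+1 _ _ _) _; try lia.
      by have := HD i'.+1 k.+1; apply; lia.
    by move/(_ (N - n)%N i n); apply; lia.
  split=> //; split=> //; split.
    by move=> n Hn; apply: HS; lia.
  split; first by move=> i n Hi _ Hc; apply: HH; lia.
  split; first by move=> i n Hi Hin Hc; apply: HD; lia.
  split; first by apply: Lo; lia.
  by apply: Up; lia.
- case=> C1 [C2 [C3 [C4 [C5 [C6 C7]]]]].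
  have A : forall i, (1 <= i <= d)%N -> 0 <= lam i i.
    move=> i Hi; case: (ltnP d N) => HdN; last first.
      by rewrite (C2 i i) //; lia.
    have : forall m j, (1 <= j)%N -> (j + m = d)%N -> 0 <= lam j j.
      elim=> [|m IH] j Hj Hjm; first by rewrite addn0 in Hjm; rewrite Hjm.
      apply: le_trans (IH j.+1 _ _) _; try lia.
      by have := C5 j.+1 j.+1; apply; lia.
    by move/(_ (d - i)%N i); apply; lia.
  have B : forall i n, (1 <= i <= d)%N -> (n + d + 1 = N + i)%N -> lam i n <= N%:R.
    move=> i n Hi Hn; case: (ltnP d N) => HdN; last first.
      by rewrite C1 //; lia.
    elim: i n Hi Hn => [|i IH] n Hi Hn; first lia.
    case: i IH Hi Hn => [|i] IH Hi Hn.
      by have -> : n = (N - d)%N by lia.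
    case: n Hn => [|n] Hn; first lia.
    apply: le_trans (C5 i.+2 n.+1 _ _ _) _; try lia.
    by apply: IH; lia.
  split.
  + by move=> i Hi; apply: C1; lia.
  + by move=> i Hi; apply: C2; lia.
  + move=> n Hn.
    case: (posnP n) => [->|Hn0].
      rewrite muln0; apply: big1_seq => i /andP[_]; rewrite mem_index_iota => Hi.
      by apply: C1; lia.
    case: (ltnP n N) => HnN; first by apply: C3; lia.
    have -> : n = N by lia.
    rewrite (eq_big_nat _ _ (F2 := fun _ => N%:R)); last first.
      by move=> i Hi; apply: C2; lia.
    by rewrite sumr_const_nat subn1 /= natrM mulr_natl.
  + move=> i n Hi Hn.
    case: (ltnP n i) => Hni.
      case: (ltnP n.+1 i) => Hni'; first by rewrite !C1 //; lia.
      have -> : i = n.+1 by lia.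
      rewrite (C1 n.+1 n) //; try lia.
      apply: A; lia.
    case: (ltnP (n + d + 1) (N + i)) => Hc; first by apply: C4.
    rewrite (C2 i n.+1) //; try lia.
    case: (ltnP (i + N) (n + d + 1)) => Hc'; first by rewrite (C2 i n) //; lia.
    apply: B => //; lia.
  + move=> i n Hi Hn.
    case: (ltnP n i) => Hni.
      by rewrite !C1 //; lia.
    case: (ltnP (n + d) (N + i)) => Hc; first by apply: C5.
    by rewrite !C2 //; lia.
Qed.
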